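(* Let $l,k\ge1$ and let $u=\mathrm{sgrad}\,f$, $v=\mathrm{sgrad}\,h$ with $f\in\mathcal Y_l$, $h\in\mathcal Y_k$. Then the operator $B$ on $\mathrm{SVect}(\mathbb S^2)\otimes\mathbb C$ defined by $\langle B(u,v),w\rangle=\langle u,[v,w]\rangle$ for all $w$ satisfies $$k(k+1)\,B(u,v)=-l(l+1)\,B(v,u).$$
   Context: $\mathbb S^2$ with spherical coordinates $(\theta,\phi)$, round metric $d\theta^2+\sin^2\theta\,d\phi^2$, area form $\mu=\sin\theta\,d\theta\wedge d\phi$. $\mathrm{SVect}(\mathbb S^2)$: divergence-free vector fields, with inner product $\langle u,v\rangle=\int_{\mathbb S^2}g(u,v)\mu$ (extended complex-bilinearly or Hermitian; the identity is linear) and Lie bracket $[\cdot,\cdot]$ of vector fields (either sign convention). $\mathrm{sgrad}\,f=\frac1{\sin\theta}(\partial_\phi f\,\partial_\theta-\partial_\theta f\,\partial_\phi)$. $\mathcal Y_l$ is the span of the spherical harmonics $Y^m_l$, $-l\le m\le l$, i.e. the eigenspace $\Delta f=-l(l+1)f$ of the Laplace–Beltrami operator. *)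

(* Defs.v *)
From Stdlib Require Import Reals List.
From Coquelicot Require Import Coquelicot.
Open Scope R_scope.

Definition pt := (R * R * R)%type.

Definition sph (t p : R) : pt := (sin t * cos p, sin t * sin p, cos t).
(** an auxiliary rotated chart, regular at the poles of [sph]; used only to
    express smoothness on the whole sphere *)
Definition sph2 (t p : R) : pt := (cos t, sin t * cos p, sin t * sin p).

(** coordinate frame vectors d(sph)/d theta and d(sph)/d phi *)
Definition e_th (t p : R) : pt := (cos t * cos p, cos t * sin p, - sin t).
Definition e_ph (t p : R) : pt := (- (sin t * sin p), sin t * cos p, 0).

Definition d1 (g : R -> R -> R) : R -> R -> R :=
  fun x y => Derive (fun s => g s y) x.
Definition d2 (g : R -> R -> R) : R -> R -> R :=
  fun x y => Derive (fun s => g x s) y.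

Fixpoint iter_d (l : list bool) (g : R -> R -> R) : R -> R -> R :=
  match l with
  | nil => g
  | b :: l' => (if b then d1 else d2) (iter_d l' g)
  end.

Definition smooth2 (g : R -> R -> R) : Prop :=
  forall (l : list bool) (x y : R),
    ex_derive (fun s => iter_d l g s y) x /\
    ex_derive (fun s => iter_d l g x s) y /\
    continuous (fun z : R * R => iter_d l g (fst z) (snd z)) (x, y).

Definition smoothC (g : R -> R -> C) : Prop :=
  smooth2 (fun x y => Re (g x y)) /\ smooth2 (fun x y => Im (g x y)).

Definition dC1 (g : R -> R -> C) : R -> R -> C :=
  fun x y => (d1 (fun a b => Re (g a b)) x y, d1 (fun a b => Im (g a b)) x y).
Definition dC2 (g : R -> R -> C) : R -> R -> C :=
  fun x y => (d2 (fun a b => Re (g a b)) x y, d2 (fun a b => Im (g a b)) x y).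

(** a complex function on S^2 is given by F : pt -> C (only its values on the
    unit sphere matter); it is smooth iff it is smooth in both charts *)
Definition smooth_S2 (F : pt -> C) : Prop :=
  smoothC (fun t p => F (sph t p)) /\ smoothC (fun t p => F (sph2 t p)).

Definition coord (F : pt -> C) : R -> R -> C := fun t p => F (sph t p).

(** complexified vector fields on S^2, as ambient maps pt -> C^3 *)
Definition vfield := pt -> (C * C * C)%type.

Definition cx (X : C * C * C) : C := fst (fst X).
Definition cy (X : C * C * C) : C := snd (fst X).
Definition cz (X : C * C * C) : C := snd X.

Definition dotR (X : C * C * C) (e : pt) : C :=
  (cx X * RtoC (fst (fst e)) + cy X * RtoC (snd (fst e)) + cz X * RtoC (snd e))%C.

Definition tangent (X : vfield) : Prop :=
  forall t p, dotR (X (sph t p)) (sph t p) = RtoC 0.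

Definition smooth_vf (X : vfield) : Prop :=
  smooth_S2 (fun q => cx (X q)) /\ smooth_S2 (fun q => cy (X q)) /\
  smooth_S2 (fun q => cz (X q)).

(** coordinate components (a, b) of X = a d_theta + b d_phi *)
Definition comps (X : vfield) : R -> R -> (C * C)%type :=
  fun t p => (dotR (X (sph t p)) (e_th t p),
              (dotR (X (sph t p)) (e_ph t p) / RtoC (sin t ^ 2))%C).

Definition cfield := R -> R -> (C * C)%type.

Definition ca (V : cfield) : R -> R -> C := fun t p => fst (V t p).
Definition cb (V : cfield) : R -> R -> C := fun t p => snd (V t p).

(** divergence w.r.t. the area form sin(theta) dtheta ^ dphi *)
Definition div (V : cfield) (t p : R) : C :=
  (RtoC (/ sin t) *
   (dC1 (fun a b => RtoC (sin a) * ca V a b)%C t p +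
    dC2 (fun a b => RtoC (sin a) * cb V a b)%C t p))%C.

Definition chart (t : R) : Prop := 0 < t < PI.

Definition in_SVect (X : vfield) : Prop :=
  smooth_vf X /\ tangent X /\
  forall t p, chart t -> div (comps X) t p = RtoC 0.

Definition bracket (V W : cfield) : cfield :=
  fun t p =>
    ((ca V t p * dC1 (ca W) t p + cb V t p * dC2 (ca W) t p
      - (ca W t p * dC1 (ca V) t p + cb W t p * dC2 (ca V) t p))%C,
     (ca V t p * dC1 (cb W) t p + cb V t p * dC2 (cb W) t p
      - (ca W t p * dC1 (cb V) t p + cb W t p * dC2 (cb V) t p))%C).

(** round metric g = dtheta^2 + sin^2 theta dphi^2, complex-bilinear *)
Definition gmet (V W : cfield) (t p : R) : C :=
  (ca V t p * ca W t p + RtoC (sin t ^ 2) * (cb V t p * cb W t p))%C.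

Definition int_S2 (h : R -> R -> C) : C :=
  (RInt (fun p => RInt (fun t => Re (h t p) * sin t) 0 PI) 0 (2 * PI),
   RInt (fun p => RInt (fun t => Im (h t p) * sin t) 0 PI) 0 (2 * PI)).

Definition ip (V W : cfield) : C := int_S2 (gmet V W).

Definition lap (f : R -> R -> C) (t p : R) : C :=
  (RtoC (/ sin t) * dC1 (fun a b => RtoC (sin a) * dC1 f a b)%C t p
   + RtoC (/ (sin t ^ 2)) * dC2 (dC2 f) t p)%C.

Definition sgrad (f : R -> R -> C) : cfield :=
  fun t p => ((RtoC (/ sin t) * dC2 f t p)%C, (- (RtoC (/ sin t) * dC1 f t p))%C).

Definition in_Y (l : nat) (F : pt -> C) : Prop :=
  smooth_S2 F /\
  forall t p, chart t ->
    lap (coord F) t p = (RtoC (- (INR l * (INR l + 1))) * coord F t p)%C.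

Definition is_sgrad (U : vfield) (F : pt -> C) : Prop :=
  in_SVect U /\ forall t p, chart t -> comps U t p = sgrad (coord F) t p.

Definition is_B (U V Bx : vfield) : Prop :=
  in_SVect Bx /\
  forall W, in_SVect W -> ip (comps Bx) (comps W) = ip (comps U) (bracket (comps V) (comps W)).

Definition vscale (c : C) (X : C * C * C) : C * C * C :=
  ((c * cx X, c * cy X), c * cz X)%C.

(* Main.v *)
From Pilot Require Import Defs.
From Stdlib Require Import Reals.
From Coquelicot Require Import Coquelicot.
Open Scope R_scope.
From Stdlib Require Import Lra FunctionalExtensionality ZArith Nsatz.
Import Pilot.Defs.
Open Scope R_scope.

Definition cont2 (g : R -> R -> R) :=
  forall x y, continuous (fun z : R * R => g (fst z) (snd z)) (x, y).

Inductive K : (R -> R -> R) -> Prop :=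
| K_sm g : smooth2 g -> K g
| K_c (a : R) : K (fun _ _ => a)
| K_sin1 : K (fun x _ => sin x)
| K_cos1 : K (fun x _ => cos x)
| K_sin2 : K (fun _ y => sin y)
| K_cos2 : K (fun _ y => cos y)
| K_plus g h : K g -> K h -> K (fun x y => g x y + h x y)
| K_mult g h : K g -> K h -> K (fun x y => g x y * h x y)
| K_opp g : K g -> K (fun x y => - g x y).

Lemma iter_d_app l m g : iter_d l (iter_d m g) = iter_d (l ++ m) g.
Proof. induction l as [|b l IH]; simpl; auto. rewrite IH; auto. Qed.

Lemma smooth2_d1 g : smooth2 g -> smooth2 (d1 g).
Proof.
  intros H l x y. change (d1 g) with (iter_d (true :: nil) g).
  rewrite iter_d_app. apply H.
Qed.
Lemma smooth2_d2 g : smooth2 g -> smooth2 (d2 g).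
Proof.
  intros H l x y. change (d2 g) with (iter_d (false :: nil) g).
  rewrite iter_d_app. apply H.
Qed.

Lemma cont_sin x : continuous sin x.
Proof. apply (ex_derive_continuous (K:=R_AbsRing) (V:=R_NormedModule)). auto_derive; auto. Qed.
Lemma cont_cos x : continuous cos x.
Proof. apply (ex_derive_continuous (K:=R_AbsRing) (V:=R_NormedModule)). auto_derive; auto. Qed.

Lemma Derive_sin' x : Derive sin x = cos x.
Proof. apply is_derive_unique. auto_derive; auto. ring. Qed.
Lemma Derive_cos' x : Derive cos x = - sin x.
Proof. apply is_derive_unique. auto_derive; auto. ring. Qed.

Lemma cont2_fst (h : R -> R) : (forall x, continuous h x) -> cont2 (fun x _ => h x).
Proof.
  intros Hh x y. apply (continuous_comp (fun z : R * R => fst z) h).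
  apply continuous_fst. apply Hh.
Qed.
Lemma cont2_snd (h : R -> R) : (forall x, continuous h x) -> cont2 (fun _ y => h y).
Proof.
  intros Hh x y. apply (continuous_comp (fun z : R * R => snd z) h).
  apply continuous_snd. apply Hh.
Qed.

Definition Kprops g :=
  (forall x y, ex_derive (fun s => g s y) x) /\
  (forall x y, ex_derive (fun s => g x s) y) /\
  cont2 g /\ K (d1 g) /\ K (d2 g).

Lemma KP g : K g -> Kprops g.
Proof.
  induction 1 as [g Hg|a| | | | |g h Kg [G1 [G2 [G3 [G4 G5]]]] Kh [H1 [H2 [H3 [H4 H5]]]]
                 |g h Kg [G1 [G2 [G3 [G4 G5]]]] Kh [H1 [H2 [H3 [H4 H5]]]]
                 |g _ [G1 [G2 [G3 [G4 G5]]]]].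
  - repeat split.
    + intros x y. apply (Hg nil x y).
    + intros x y. apply (Hg nil x y).
    + intros x y. apply (Hg nil x y).
    + apply K_sm, smooth2_d1, Hg.
    + apply K_sm, smooth2_d2, Hg.
  - repeat split.
    + intros; apply ex_derive_const.
    + intros; apply ex_derive_const.
    + intros x y; apply continuous_const.
    + replace (d1 (fun _ _ => a)) with (fun _ _ : R => 0). apply K_c.
      unfold d1; do 2 (apply functional_extensionality; intro); rewrite Derive_const; auto.
    + replace (d2 (fun _ _ => a)) with (fun _ _ : R => 0). apply K_c.
      unfold d2; do 2 (apply functional_extensionality; intro); rewrite Derive_const; auto.
  - repeat split.
    + intros; auto_derive; auto.
    + intros; apply ex_derive_const.
    + apply cont2_fst, cont_sin.
    + replace (d1 (fun x _ => sin x)) with (fun x (_ : R) => cos x). apply K_cos1.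
      unfold d1; do 2 (apply functional_extensionality; intro); rewrite Derive_sin'; auto.
    + replace (d2 (fun x _ => sin x)) with (fun _ _ : R => 0). apply K_c.
      unfold d2; do 2 (apply functional_extensionality; intro); rewrite Derive_const; auto.
  - repeat split.
    + intros; auto_derive; auto.
    + intros; apply ex_derive_const.
    + apply cont2_fst, cont_cos.
    + replace (d1 (fun x _ => cos x)) with (fun x (_ : R) => - sin x). apply K_opp, K_sin1.
      unfold d1; do 2 (apply functional_extensionality; intro); rewrite Derive_cos'; auto.
    + replace (d2 (fun x _ => cos x)) with (fun _ _ : R => 0). apply K_c.
      unfold d2; do 2 (apply functional_extensionality; intro); rewrite Derive_const; auto.
  - repeat split.
    + intros; apply ex_derive_const.
    + intros; auto_derive; auto.
    + apply cont2_snd, cont_sin.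
    + replace (d1 (fun _ y => sin y)) with (fun _ _ : R => 0). apply K_c.
      unfold d1; do 2 (apply functional_extensionality; intro); rewrite Derive_const; auto.
    + replace (d2 (fun _ y => sin y)) with (fun (_ : R) y => cos y). apply K_cos2.
      unfold d2; do 2 (apply functional_extensionality; intro); rewrite Derive_sin'; auto.
  - repeat split.
    + intros; apply ex_derive_const.
    + intros; auto_derive; auto.
    + apply cont2_snd, cont_cos.
    + replace (d1 (fun _ y => cos y)) with (fun _ _ : R => 0). apply K_c.
      unfold d1; do 2 (apply functional_extensionality; intro); rewrite Derive_const; auto.
    + replace (d2 (fun _ y => cos y)) with (fun (_ : R) y => - sin y). apply K_opp, K_sin2.
      unfold d2; do 2 (apply functional_extensionality; intro); rewrite Derive_cos'; auto.
  - repeat split.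
    + intros x y; apply (ex_derive_plus (fun s => g s y) (fun s => h s y)); auto.
    + intros x y; apply (ex_derive_plus (fun s => g x s) (fun s => h x s)); auto.
    + intros x y; apply (continuous_plus (fun z : R * R => g (fst z) (snd z))
                                         (fun z : R * R => h (fst z) (snd z))); auto.
    + replace (d1 (fun x y => g x y + h x y)) with (fun x y => d1 g x y + d1 h x y).
      apply K_plus; auto.
      unfold d1; do 2 (apply functional_extensionality; intro).
      rewrite (Derive_plus (fun s => g s _) (fun s => h s _)); auto.
    + replace (d2 (fun x y => g x y + h x y)) with (fun x y => d2 g x y + d2 h x y).
      apply K_plus; auto.
      unfold d2; do 2 (apply functional_extensionality; intro).
      rewrite (Derive_plus (fun s => g _ s) (fun s => h _ s)); auto.
  - repeat split.
    + intros x y; apply (ex_derive_mult (fun s => g s y) (fun s => h s y)); auto.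
    + intros x y; apply (ex_derive_mult (fun s => g x s) (fun s => h x s)); auto.
    + intros x y; apply (continuous_mult (fun z : R * R => g (fst z) (snd z))
                                         (fun z : R * R => h (fst z) (snd z))); auto.
    + replace (d1 (fun x y => g x y * h x y))
        with (fun x y => d1 g x y * h x y + g x y * d1 h x y).
      apply K_plus; apply K_mult; auto.
      unfold d1; do 2 (apply functional_extensionality; intro).
      rewrite (Derive_mult (fun s => g s _) (fun s => h s _)); auto.
    + replace (d2 (fun x y => g x y * h x y))
        with (fun x y => d2 g x y * h x y + g x y * d2 h x y).
      apply K_plus; apply K_mult; auto.
      unfold d2; do 2 (apply functional_extensionality; intro).
      rewrite (Derive_mult (fun s => g _ s) (fun s => h _ s)); auto.
  - repeat split.
    + intros x y; apply (ex_derive_opp (fun s => g s y)); auto.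
    + intros x y; apply (ex_derive_opp (fun s => g x s)); auto.
    + intros x y; apply (continuous_opp (fun z : R * R => g (fst z) (snd z))); auto.
    + replace (d1 (fun x y => - g x y)) with (fun x y => - d1 g x y).
      apply K_opp; auto.
      unfold d1; do 2 (apply functional_extensionality; intro).
      rewrite (Derive_opp (fun s => g s _)); auto.
    + replace (d2 (fun x y => - g x y)) with (fun x y => - d2 g x y).
      apply K_opp; auto.
      unfold d2; do 2 (apply functional_extensionality; intro).
      rewrite (Derive_opp (fun s => g _ s)); auto.
Qed.

Ltac cunf := unfold Cminus, Cdiv, Cmult, Cplus, Copp, Cinv, RtoC, Re, Im in *; simpl in *.
Ltac ceq := apply injective_projections; cunf; unfold Re, Im.

Lemma K_ex1 g x y : K g -> ex_derive (fun s => g s y) x.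
Proof. intros H; destruct (KP g H) as [A _]; apply A. Qed.
Lemma K_ex2 g x y : K g -> ex_derive (fun s => g x s) y.
Proof. intros H; destruct (KP g H) as [_ [A _]]; apply A. Qed.
Lemma K_cont g : K g -> cont2 g.
Proof. intros H; destruct (KP g H) as [_ [_ [A _]]]; apply A. Qed.
Lemma K_d1 g : K g -> K (d1 g).
Proof. intros H; destruct (KP g H) as [_ [_ [_ [A _]]]]; apply A. Qed.
Lemma K_d2 g : K g -> K (d2 g).
Proof. intros H; destruct (KP g H) as [_ [_ [_ [_ A]]]]; apply A. Qed.

Lemma K_minus g h : K g -> K h -> K (fun x y => g x y - h x y).
Proof. intros; unfold Rminus; apply K_plus; auto; apply K_opp; auto. Qed.

Lemma d1_plus g h x y : K g -> K h -> d1 (fun a b => g a b + h a b) x y = d1 g x y + d1 h x y.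
Proof. intros; unfold d1; apply (Derive_plus (fun s => g s y) (fun s => h s y)); apply K_ex1; auto. Qed.
Lemma d2_plus g h x y : K g -> K h -> d2 (fun a b => g a b + h a b) x y = d2 g x y + d2 h x y.
Proof. intros; unfold d2; apply (Derive_plus (fun s => g x s) (fun s => h x s)); apply K_ex2; auto. Qed.
Lemma d1_minus g h x y : K g -> K h -> d1 (fun a b => g a b - h a b) x y = d1 g x y - d1 h x y.
Proof. intros; unfold d1; apply (Derive_minus (fun s => g s y) (fun s => h s y)); apply K_ex1; auto. Qed.
Lemma d2_minus g h x y : K g -> K h -> d2 (fun a b => g a b - h a b) x y = d2 g x y - d2 h x y.
Proof. intros; unfold d2; apply (Derive_minus (fun s => g x s) (fun s => h x s)); apply K_ex2; auto. Qed.
Lemma d1_mult g h x y : K g -> K h -> d1 (fun a b => g a b * h a b) x y = d1 g x y * h x y + g x y * d1 h x y.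
Proof. intros; unfold d1; apply (Derive_mult (fun s => g s y) (fun s => h s y)); apply K_ex1; auto. Qed.
Lemma d2_mult g h x y : K g -> K h -> d2 (fun a b => g a b * h a b) x y = d2 g x y * h x y + g x y * d2 h x y.
Proof. intros; unfold d2; apply (Derive_mult (fun s => g x s) (fun s => h x s)); apply K_ex2; auto. Qed.
Lemma d1_opp g x y : d1 (fun a b => - g a b) x y = - d1 g x y.
Proof. unfold d1; apply (Derive_opp (fun s => g s y)). Qed.
Lemma d2_opp g x y : d2 (fun a b => - g a b) x y = - d2 g x y.
Proof. unfold d2; apply (Derive_opp (fun s => g x s)). Qed.
Lemma d1_c a x y : d1 (fun _ _ => a) x y = 0.
Proof. unfold d1; apply Derive_const. Qed.
Lemma d2_c a x y : d2 (fun _ _ => a) x y = 0.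
Proof. unfold d2; apply Derive_const. Qed.
Lemma d1_ext g h : (forall a b, g a b = h a b) -> d1 g = d1 h.
Proof. intros H; replace g with h; auto. do 2 (apply functional_extensionality; intro); auto. Qed.
Lemma d2_ext g h : (forall a b, g a b = h a b) -> d2 g = d2 h.
Proof. intros H; replace g with h; auto. do 2 (apply functional_extensionality; intro); auto. Qed.
Lemma K_ext g h : K g -> (forall a b, g a b = h a b) -> K h.
Proof. intros H E; replace h with g; auto. do 2 (apply functional_extensionality; intro); auto. Qed.

Definition KC (g : R -> R -> C) :=
  K (fun x y => Re (g x y)) /\ K (fun x y => Im (g x y)).

Lemma KC_plus g h : KC g -> KC h -> KC (fun x y => (g x y + h x y)%C).
Proof. intros [A B] [C D]; split; cunf; apply K_plus; auto. Qed.
Lemma KC_opp g : KC g -> KC (fun x y => (- g x y)%C).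
Proof. intros [A B]; split; cunf; apply K_opp; auto. Qed.
Lemma KC_minus g h : KC g -> KC h -> KC (fun x y => (g x y - h x y)%C).
Proof. intros [A B] [C D]; split; cunf; apply K_plus; auto; apply K_opp; auto. Qed.
Lemma KC_mult g h : KC g -> KC h -> KC (fun x y => (g x y * h x y)%C).
Proof.
  intros [A B] [C D]; split; cunf.
  - apply K_minus; apply K_mult; auto.
  - apply K_plus; apply K_mult; auto.
Qed.
Lemma KC_R r : K r -> KC (fun x y => RtoC (r x y)).
Proof. intros; split; cunf; auto. apply K_c. Qed.
Lemma KC_c (c : C) : KC (fun _ _ => c).
Proof. split; apply K_c. Qed.
Lemma KC_d1 g : KC g -> KC (dC1 g).
Proof. intros [A B]; split; unfold dC1; cunf; apply K_d1; auto. Qed.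
Lemma KC_d2 g : KC g -> KC (dC2 g).
Proof. intros [A B]; split; unfold dC2; cunf; apply K_d2; auto. Qed.

Lemma dC1_plus g h x y : KC g -> KC h ->
  dC1 (fun a b => (g a b + h a b)%C) x y = (dC1 g x y + dC1 h x y)%C.
Proof.
  intros [A B] [C D]; unfold dC1; ceq.
  - apply (d1_plus (fun a b => fst (g a b)) (fun a b => fst (h a b))); auto.
  - apply (d1_plus (fun a b => snd (g a b)) (fun a b => snd (h a b))); auto.
Qed.
Lemma dC2_plus g h x y : KC g -> KC h ->
  dC2 (fun a b => (g a b + h a b)%C) x y = (dC2 g x y + dC2 h x y)%C.
Proof.
  intros [A B] [C D]; unfold dC2; ceq.
  - apply (d2_plus (fun a b => fst (g a b)) (fun a b => fst (h a b))); auto.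
  - apply (d2_plus (fun a b => snd (g a b)) (fun a b => snd (h a b))); auto.
Qed.
Lemma dC1_opp g x y : dC1 (fun a b => (- g a b)%C) x y = (- dC1 g x y)%C.
Proof.
  unfold dC1; ceq.
  - apply (d1_opp (fun a b => fst (g a b))).
  - apply (d1_opp (fun a b => snd (g a b))).
Qed.
Lemma dC2_opp g x y : dC2 (fun a b => (- g a b)%C) x y = (- dC2 g x y)%C.
Proof.
  unfold dC2; ceq.
  - apply (d2_opp (fun a b => fst (g a b))).
  - apply (d2_opp (fun a b => snd (g a b))).
Qed.
Lemma dC1_minus g h x y : KC g -> KC h ->
  dC1 (fun a b => (g a b - h a b)%C) x y = (dC1 g x y - dC1 h x y)%C.
Proof.
  intros Hg Hh. unfold Cminus.
  rewrite (dC1_plus g (fun a b => (- h a b)%C)); auto.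
  rewrite dC1_opp; auto. apply KC_opp; auto.
Qed.
Lemma dC2_minus g h x y : KC g -> KC h ->
  dC2 (fun a b => (g a b - h a b)%C) x y = (dC2 g x y - dC2 h x y)%C.
Proof.
  intros Hg Hh. unfold Cminus.
  rewrite (dC2_plus g (fun a b => (- h a b)%C)); auto.
  rewrite dC2_opp; auto. apply KC_opp; auto.
Qed.
Lemma dC1_mult g h x y : KC g -> KC h ->
  dC1 (fun a b => (g a b * h a b)%C) x y = (dC1 g x y * h x y + g x y * dC1 h x y)%C.
Proof.
  intros [A B] [C D]; unfold dC1; ceq.
  - rewrite (d1_minus (fun a b => fst (g a b) * fst (h a b)) (fun a b => snd (g a b) * snd (h a b)));
      try (apply K_mult; auto).
    rewrite (d1_mult (fun a b => fst (g a b)) (fun a b => fst (h a b))); auto.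
    rewrite (d1_mult (fun a b => snd (g a b)) (fun a b => snd (h a b))); auto. ring.
  - rewrite (d1_plus (fun a b => fst (g a b) * snd (h a b)) (fun a b => snd (g a b) * fst (h a b)));
      try (apply K_mult; auto).
    rewrite (d1_mult (fun a b => fst (g a b)) (fun a b => snd (h a b))); auto.
    rewrite (d1_mult (fun a b => snd (g a b)) (fun a b => fst (h a b))); auto. ring.
Qed.
Lemma dC2_mult g h x y : KC g -> KC h ->
  dC2 (fun a b => (g a b * h a b)%C) x y = (dC2 g x y * h x y + g x y * dC2 h x y)%C.
Proof.
  intros [A B] [C D]; unfold dC2; ceq.
  - rewrite (d2_minus (fun a b => fst (g a b) * fst (h a b)) (fun a b => snd (g a b) * snd (h a b)));
      try (apply K_mult; auto).
    rewrite (d2_mult (fun a b => fst (g a b)) (fun a b => fst (h a b))); auto.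
    rewrite (d2_mult (fun a b => snd (g a b)) (fun a b => snd (h a b))); auto. ring.
  - rewrite (d2_plus (fun a b => fst (g a b) * snd (h a b)) (fun a b => snd (g a b) * fst (h a b)));
      try (apply K_mult; auto).
    rewrite (d2_mult (fun a b => fst (g a b)) (fun a b => snd (h a b))); auto.
    rewrite (d2_mult (fun a b => snd (g a b)) (fun a b => fst (h a b))); auto. ring.
Qed.
Lemma dC1_R r x y : dC1 (fun a b => RtoC (r a b)) x y = RtoC (d1 r x y).
Proof. unfold dC1; ceq; auto. apply d1_c. Qed.
Lemma dC2_R r x y : dC2 (fun a b => RtoC (r a b)) x y = RtoC (d2 r x y).
Proof. unfold dC2; ceq; auto. apply d2_c. Qed.
Lemma dC1_c (c : C) x y : dC1 (fun _ _ => c) x y = RtoC 0.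
Proof. unfold dC1; ceq; apply d1_c. Qed.
Lemma dC2_c (c : C) x y : dC2 (fun _ _ => c) x y = RtoC 0.
Proof. unfold dC2; ceq; apply d2_c. Qed.
Lemma dC1_ext g h : (forall a b, g a b = h a b) -> dC1 g = dC1 h.
Proof. intros H; replace g with h; auto. do 2 (apply functional_extensionality; intro); auto. Qed.
Lemma dC2_ext g h : (forall a b, g a b = h a b) -> dC2 g = dC2 h.
Proof. intros H; replace g with h; auto. do 2 (apply functional_extensionality; intro); auto. Qed.
Lemma KC_ext g h : KC g -> (forall a b, g a b = h a b) -> KC h.
Proof. intros H E; replace h with g; auto. do 2 (apply functional_extensionality; intro); auto. Qed.

Ltac kk := repeat first [ apply K_plus | apply K_minus | apply K_mult | apply K_opp
  | apply K_c | apply K_sin1 | apply K_cos1 | apply K_sin2 | apply K_cos2 | apply K_d1 | apply K_d2 | assumption ].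
Ltac kc := repeat match goal with
  | |- KC _ => first [ assumption | apply KC_plus | apply KC_minus | apply KC_mult | apply KC_opp
                     | apply KC_R | apply KC_c | apply KC_d1 | apply KC_d2 ]
  | |- K _ => first [ assumption | apply K_plus | apply K_minus | apply K_mult | apply K_opp
                    | apply K_c | apply K_sin1 | apply K_cos1 | apply K_sin2 | apply K_cos2
                    | apply K_d1 | apply K_d2 ]
  end.

Lemma fst_add (a b : C) : fst (a + b)%C = fst a + fst b. Proof. reflexivity. Qed.
Lemma snd_add (a b : C) : snd (a + b)%C = snd a + snd b. Proof. reflexivity. Qed.
Lemma fst_mul (a b : C) : fst (a * b)%C = fst a * fst b - snd a * snd b. Proof. reflexivity. Qed.
Lemma snd_mul (a b : C) : snd (a * b)%C = fst a * snd b + snd a * fst b. Proof. reflexivity. Qed.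
Lemma fst_opp (a : C) : fst (- a)%C = - fst a. Proof. reflexivity. Qed.
Lemma snd_opp (a : C) : snd (- a)%C = - snd a. Proof. reflexivity. Qed.
Lemma fst_sub (a b : C) : fst (a - b)%C = fst a - fst b. Proof. reflexivity. Qed.
Lemma snd_sub (a b : C) : snd (a - b)%C = snd a - snd b. Proof. reflexivity. Qed.
Lemma fst_R (r : R) : fst (RtoC r) = r. Proof. reflexivity. Qed.
Lemma snd_R (r : R) : snd (RtoC r) = 0. Proof. reflexivity. Qed.
Lemma fst_pair (x y : R) : fst (x, y) = x. Proof. reflexivity. Qed.
Lemma snd_pair (x y : R) : snd (x, y) = y. Proof. reflexivity. Qed.
Lemma fst_div (a b : C) : fst (a / b)%C = fst (a * / b)%C. Proof. reflexivity. Qed.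
Lemma snd_div (a b : C) : snd (a / b)%C = snd (a * / b)%C. Proof. reflexivity. Qed.
Lemma fst_inv (a : C) : fst (/ a)%C = fst a / (fst a ^ 2 + snd a ^ 2). Proof. reflexivity. Qed.
Lemma snd_inv (a : C) : snd (/ a)%C = - snd a / (fst a ^ 2 + snd a ^ 2). Proof. reflexivity. Qed.
#[global] Hint Rewrite fst_add snd_add fst_mul snd_mul fst_opp snd_opp fst_sub snd_sub fst_R snd_R
  fst_pair snd_pair fst_div snd_div fst_inv snd_inv : creal.
Ltac ceq ::= apply injective_projections; unfold Re, Im; autorewrite with creal.
Arguments dC1 g t p : simpl never.
Arguments dC2 g t p : simpl never.
Arguments d1 g x y : simpl never.
Arguments d2 g x y : simpl never.

Definition ephh (p : R) : pt := (- sin p, cos p, 0).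
Definition F1 (X : vfield) t p := dotR (X (sph t p)) (e_th t p).
Definition F2 (X : vfield) t p := dotR (X (sph t p)) (ephh p).
Definition Xx (X : vfield) t p := cx (X (sph t p)).
Definition Xy (X : vfield) t p := cy (X (sph t p)).
Definition Xz (X : vfield) t p := cz (X (sph t p)).
Arguments F1 X t p : simpl never.
Arguments F2 X t p : simpl never.
Arguments Xx X t p : simpl never.
Arguments Xy X t p : simpl never.
Arguments Xz X t p : simpl never.

Lemma KC_sm F : smooth_S2 F -> KC (fun t p => F (sph t p)).
Proof. intros [[A B] _]; split; apply K_sm; auto. Qed.

Lemma KC_X X : smooth_vf X -> KC (Xx X) /\ KC (Xy X) /\ KC (Xz X).
Proof.
  intros [A [B C]]. repeat split; apply (KC_sm (fun q => _ (X q))); auto.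
Qed.

Lemma F1_eq X t p : F1 X t p =
  (Xx X t p * RtoC (cos t * cos p) + Xy X t p * RtoC (cos t * sin p) + Xz X t p * RtoC (- sin t))%C.
Proof. reflexivity. Qed.
Lemma F2_eq X t p : F2 X t p =
  (Xx X t p * RtoC (- sin p) + Xy X t p * RtoC (cos p) + Xz X t p * RtoC 0)%C.
Proof. reflexivity. Qed.

Lemma KC_F1 X : smooth_vf X -> KC (F1 X).
Proof.
  intros H; destruct (KC_X X H) as [A [B C]].
  apply (KC_ext (fun t p => (Xx X t p * RtoC (cos t * cos p) + Xy X t p * RtoC (cos t * sin p)
     + Xz X t p * RtoC (- sin t))%C)); [kc | reflexivity].
Qed.
Lemma KC_F2 X : smooth_vf X -> KC (F2 X).
Proof.
  intros H; destruct (KC_X X H) as [A [B C]].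
  apply (KC_ext (fun t p => (Xx X t p * RtoC (- sin p) + Xy X t p * RtoC (cos p)
     + Xz X t p * RtoC 0)%C)); [kc | reflexivity].
Qed.

Lemma dot_eph X t p : dotR (X (sph t p)) (e_ph t p) = (RtoC (sin t) * F2 X t p)%C.
Proof. unfold F2, dotR, e_ph, ephh; simpl; ceq; ring. Qed.

Lemma chart_loc t : chart t -> exists eps : posreal, forall a, Rabs (a - t) < eps -> chart a.
Proof.
  intros [H1 H2]. assert (He : 0 < Rmin t (PI - t)) by (apply Rmin_pos; lra).
  exists (mkposreal _ He); simpl; intros a Ha.
  pose proof (Rmin_l t (PI - t)); pose proof (Rmin_r t (PI - t)).
  apply Rabs_lt_between in Ha. split; lra.
Qed.

Lemma chart_sin t : chart t -> sin t <> 0.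
Proof. intros [H1 H2]; apply Rgt_not_eq, sin_gt_0; auto. Qed.

Lemma Derive_loc (f g : R -> R) t : chart t -> (forall a, chart a -> f a = g a) -> Derive f t = Derive g t.
Proof.
  intros Ht H. apply Derive_ext_loc. destruct (chart_loc t Ht) as [eps He].
  exists eps; intros a Ha. apply H, He.
  unfold ball in Ha; simpl in Ha. unfold AbsRing_ball, abs, minus, plus, opp in Ha; simpl in Ha. exact Ha.
Qed.

Lemma dC1_loc g h t p : chart t -> (forall a, chart a -> g a p = h a p) -> dC1 g t p = dC1 h t p.
Proof.
  intros Ht H; unfold dC1, d1; apply injective_projections; simpl; apply Derive_loc; auto;
  intros a Ha; rewrite H; auto.
Qed.
Lemma dC2_loc g h t p : (forall b, g t b = h t b) -> dC2 g t p = dC2 h t p.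
Proof.
  intros H; unfold dC2, d2; apply injective_projections; simpl; apply Derive_ext; intros b; rewrite H; auto.
Qed.

Lemma d1_mult_loc g r t p : K g -> ex_derive r t ->
  d1 (fun a b => g a b * r a) t p = d1 g t p * r t + g t p * Derive r t.
Proof. intros; unfold d1; apply (Derive_mult (fun a => g a p) r); auto; apply K_ex1; auto. Qed.

Lemma Derive_inv_sin t : sin t <> 0 -> Derive (fun a => / sin a) t = - cos t / (sin t) ^ 2.
Proof. intros H; apply is_derive_unique; auto_derive; auto. field; auto. Qed.

Lemma cb_comps X a p : sin a <> 0 -> cb (comps X) a p = (F2 X a p * RtoC (/ sin a))%C.
Proof.
  intros H. unfold cb, comps; simpl. rewrite dot_eph. ceq; field; auto.
Qed.

Lemma dC1_cb X t p : smooth_vf X -> chart t ->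
  dC1 (cb (comps X)) t p =
  (dC1 (F2 X) t p * RtoC (/ sin t) + F2 X t p * RtoC (- cos t / (sin t) ^ 2))%C.
Proof.
  intros HX Ht. destruct (KC_F2 X HX) as [A B].
  rewrite (dC1_loc _ (fun a b => (fst (F2 X a b) * / sin a, snd (F2 X a b) * / sin a))) by
    (first [assumption | intros; rewrite cb_comps; [ceq; ring | apply chart_sin; auto]]).
  unfold dC1; ceq.
  - rewrite (d1_mult_loc (fun a b => fst (F2 X a b)) (fun a => / sin a)); auto.
    rewrite Derive_inv_sin by (apply chart_sin; auto). unfold Re. ring.
    auto_derive; apply chart_sin; auto.
  - rewrite (d1_mult_loc (fun a b => snd (F2 X a b)) (fun a => / sin a)); auto.
    rewrite Derive_inv_sin by (apply chart_sin; auto). unfold Im. ring.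
    auto_derive; apply chart_sin; auto.
Qed.

Lemma dC2_multR g (r : R -> R) x y :
  dC2 (fun a b => (g a b * RtoC (r a))%C) x y = (dC2 g x y * RtoC (r x))%C.
Proof.
  unfold dC2, d2; ceq.
  - rewrite (Derive_ext _ (fun s => r x * fst (g x s))) by (intros; autorewrite with creal; ring).
    rewrite Derive_scal; ring.
  - rewrite (Derive_ext _ (fun s => r x * snd (g x s))) by (intros; autorewrite with creal; ring).
    rewrite Derive_scal; ring.
Qed.

Lemma dC2_cb X t p : chart t -> dC2 (cb (comps X)) t p = (dC2 (F2 X) t p * RtoC (/ sin t))%C.
Proof.
  intros Ht. rewrite (dC2_loc _ (fun a b => (F2 X a b * RtoC (/ sin a))%C)).
  apply (dC2_multR _ (fun a => / sin a)). intros; apply cb_comps, chart_sin; auto.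
Qed.

Lemma dC1_sin t p : dC1 (fun a _ => RtoC (sin a)) t p = RtoC (cos t).
Proof. rewrite (dC1_R (fun a _ => sin a)). unfold d1. rewrite Derive_sin'; auto. Qed.
Lemma dC2_sin t p : dC2 (fun a _ => RtoC (sin a)) t p = RtoC 0.
Proof. rewrite (dC2_R (fun a _ => sin a)). unfold d2. rewrite Derive_const; auto. Qed.

Lemma RtoC_neq x : x <> 0 -> RtoC x <> RtoC 0.
Proof. intros H E; apply H. apply (f_equal fst) in E; exact E. Qed.

Ltac toC := rewrite ?RtoC_div, ?RtoC_inv, ?RtoC_opp, ?RtoC_pow, ?RtoC_mult, ?RtoC_plus, ?RtoC_minus.

Lemma sg1 (U : vfield) (f : pt -> C) t p : chart t -> comps U t p = sgrad (coord f) t p ->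
  dC2 (coord f) t p = (RtoC (sin t) * F1 U t p)%C.
Proof.
  intros Ht H. apply (f_equal fst) in H. unfold comps, sgrad in H; cbn [fst snd] in H.
  change (dotR (U (sph t p)) (e_th t p)) with (F1 U t p) in H.
  rewrite H. pose proof (chart_sin t Ht). rewrite RtoC_inv by auto.
  field. apply RtoC_neq; auto.
Qed.

Lemma sg2 (U : vfield) (f : pt -> C) t p : chart t -> comps U t p = sgrad (coord f) t p ->
  dC1 (coord f) t p = (- F2 U t p)%C.
Proof.
  intros Ht H. apply (f_equal snd) in H. unfold comps, sgrad in H; cbn [fst snd] in H.
  rewrite dot_eph in H. pose proof (chart_sin t Ht).
  rewrite RtoC_inv in H by auto. rewrite RtoC_pow in H.
  assert (Hs : RtoC (sin t) <> RtoC 0) by (apply RtoC_neq; auto).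
  assert (E : (- F2 U t p)%C = (- (RtoC (sin t) * ((RtoC (sin t) * F2 U t p) / RtoC (sin t) ^ 2)))%C)
    by (field; auto).
  rewrite E, H. field; auto.
Qed.

Lemma divc X t p : smooth_vf X -> chart t -> div (comps X) t p = RtoC 0 ->
  dC2 (F2 X) t p = (- (RtoC (cos t) * F1 X t p + RtoC (sin t) * dC1 (F1 X) t p))%C.
Proof.
  intros HX Ht H. unfold div in H. pose proof (chart_sin t Ht) as Hs0.
  pose proof (KC_F1 X HX) as K1.
  assert (Hs : RtoC (sin t) <> RtoC 0) by (apply RtoC_neq; auto).
  change (ca (comps X)) with (F1 X) in H.
  rewrite (dC1_mult (fun a _ => RtoC (sin a)) (F1 X)) in H by kc.
  rewrite dC1_sin in H.
  rewrite (dC2_loc _ (F2 X)) in H.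
  2: { intros b. rewrite cb_comps by auto. rewrite RtoC_inv by auto. field; auto. }
  rewrite RtoC_inv in H by auto.
  assert (H' : (RtoC (sin t) * (/ RtoC (sin t) * (RtoC (cos t) * F1 X t p + RtoC (sin t) * dC1 (F1 X) t p +
     dC2 (F2 X) t p)))%C = RtoC 0) by (rewrite H; ring).
  replace (dC2 (F2 X) t p) with
    ((RtoC (sin t) * (/ RtoC (sin t) * (RtoC (cos t) * F1 X t p + RtoC (sin t) * dC1 (F1 X) t p +
     dC2 (F2 X) t p))) - (RtoC (cos t) * F1 X t p + RtoC (sin t) * dC1 (F1 X) t p))%C by (field; auto).
  rewrite H'. ring.
Qed.

Lemma lin1 (s X Y Z R0 : C) : s <> RtoC 0 ->
  (/ s * - Y + / (s * s) * (RtoC 0 * Z + s * X))%C = R0 -> X = (s * R0 + Y)%C.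
Proof. intros Hs H. rewrite <- H. field. auto. Qed.

Lemma lapc (U : vfield) (f : pt -> C) lam t p : smooth_vf U -> chart t ->
  (forall t p, chart t -> comps U t p = sgrad (coord f) t p) ->
  lap (coord f) t p = (RtoC (- lam) * coord f t p)%C ->
  dC2 (F1 U) t p = (RtoC (cos t) * F2 U t p + RtoC (sin t) * dC1 (F2 U) t p
                    - RtoC lam * RtoC (sin t) * coord f t p)%C.
Proof.
  intros HU Ht HS HL. unfold lap in HL. pose proof (chart_sin t Ht) as Hs0.
  assert (Hs : RtoC (sin t) <> RtoC 0) by (apply RtoC_neq; auto).
  pose proof (KC_F1 U HU) as K1. pose proof (KC_F2 U HU) as K2.
  rewrite (dC1_loc _ (fun a b => (- (RtoC (sin a) * F2 U a b))%C)) in HL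
    by (first [assumption | intros a Ha; rewrite (sg2 U f a p Ha (HS a p Ha)); ring]).
  rewrite dC1_opp in HL.
  rewrite (dC1_mult (fun a _ => RtoC (sin a)) (F2 U)) in HL by kc.
  rewrite dC1_sin in HL.
  rewrite (dC2_loc (dC2 (coord f)) (fun a b => (RtoC (sin a) * F1 U a b)%C)) in HL
    by (intros b; apply (sg1 U f t b Ht (HS t b Ht))).
  rewrite (dC2_mult (fun a _ => RtoC (sin a)) (F1 U)) in HL by kc.
  rewrite dC2_sin in HL.
  replace (sin t ^ 2) with (sin t * sin t) in HL by ring.
  rewrite RtoC_inv in HL by auto. rewrite RtoC_inv in HL by (apply Rmult_integral_contrapositive; auto).
  rewrite RtoC_mult in HL.
  apply lin1 in HL; auto. rewrite HL. rewrite RtoC_opp. ring.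
Qed.

Definition sE' (U1 U2 V1 V2 W1 W2 : R -> R -> C) t p : C :=
 (U1 t p * (RtoC (sin t) * V1 t p * dC1 W1 t p + V2 t p * dC2 W1 t p
            - RtoC (sin t) * W1 t p * dC1 V1 t p - W2 t p * dC2 V1 t p)
 + U2 t p * (RtoC (sin t) * V1 t p * dC1 W2 t p - RtoC (cos t) * V1 t p * W2 t p
            + V2 t p * dC2 W2 t p - RtoC (sin t) * W1 t p * dC1 V2 t p
            + RtoC (cos t) * W1 t p * V2 t p - W2 t p * dC2 V2 t p))%C.

Lemma ca_br V W t p : ca (bracket V W) t p = (ca V t p * dC1 (ca W) t p + cb V t p * dC2 (ca W) t p
      - (ca W t p * dC1 (ca V) t p + cb W t p * dC2 (ca V) t p))%C.
Proof. reflexivity. Qed.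
Lemma cb_br V W t p : cb (bracket V W) t p = (ca V t p * dC1 (cb W) t p + cb V t p * dC2 (cb W) t p
      - (ca W t p * dC1 (cb V) t p + cb W t p * dC2 (cb V) t p))%C.
Proof. reflexivity. Qed.

Lemma gmet_sE U V W t p : smooth_vf W -> smooth_vf V -> chart t ->
  (gmet (comps U) (bracket (comps V) (comps W)) t p * RtoC (sin t))%C =
  sE' (F1 U) (F2 U) (F1 V) (F2 V) (F1 W) (F2 W) t p.
Proof.
  intros HW HV Ht. pose proof (chart_sin t Ht) as Hs0.
  assert (Hs : RtoC (sin t) <> RtoC 0) by (apply RtoC_neq; auto).
  unfold gmet, sE'. rewrite ca_br, cb_br.
  rewrite !dC1_cb, !dC2_cb by auto.
  rewrite !cb_comps by auto.
  change (ca (comps U)) with (F1 U). change (ca (comps V)) with (F1 V).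
  change (ca (comps W)) with (F1 W).
  toC. field. auto.
  all: try apply pow_nonzero; auto.
Qed.

Definition Af (U1 U2 V1 V2 W1 W2 f h : R -> R -> C) (lam mu : R) : R -> R -> C :=
  fun t p => (RtoC (sin t) * (RtoC mu * ((W2 t p * V1 t p - W1 t p * V2 t p) * U2 t p)
    + RtoC lam * ((W2 t p * U1 t p - W1 t p * U2 t p) * V2 t p)
    - RtoC (lam * mu) * (f t p * h t p * W1 t p)))%C.
Definition Bf (U1 U2 V1 V2 W1 W2 f h : R -> R -> C) (lam mu : R) : R -> R -> C :=
  fun t p => (- (RtoC mu * ((W2 t p * V1 t p - W1 t p * V2 t p) * U1 t p))
    - RtoC lam * ((W2 t p * U1 t p - W1 t p * U2 t p) * V1 t p)
    - RtoC (lam * mu) * (f t p * h t p * W2 t p))%C.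

Ltac dsimp := repeat first [
   rewrite dC1_sin | rewrite dC2_sin
 | rewrite dC1_plus by kc | rewrite dC1_minus by kc | rewrite dC1_mult by kc | rewrite dC1_opp
 | rewrite dC2_plus by kc | rewrite dC2_minus by kc | rewrite dC2_mult by kc | rewrite dC2_opp
 | rewrite dC1_c | rewrite dC2_c ].

Lemma key_alg (U1 U2 V1 V2 W1 W2 f h : R -> R -> C) (lam mu t p : R) :
  KC U1 -> KC U2 -> KC V1 -> KC V2 -> KC W1 -> KC W2 -> KC f -> KC h ->
  dC1 f t p = (- U2 t p)%C -> dC2 f t p = (RtoC (sin t) * U1 t p)%C ->
  dC1 h t p = (- V2 t p)%C -> dC2 h t p = (RtoC (sin t) * V1 t p)%C ->
  dC2 U2 t p = (- (RtoC (cos t) * U1 t p + RtoC (sin t) * dC1 U1 t p))%C ->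
  dC2 V2 t p = (- (RtoC (cos t) * V1 t p + RtoC (sin t) * dC1 V1 t p))%C ->
  dC2 W2 t p = (- (RtoC (cos t) * W1 t p + RtoC (sin t) * dC1 W1 t p))%C ->
  dC2 U1 t p = (RtoC (cos t) * U2 t p + RtoC (sin t) * dC1 U2 t p - RtoC lam * RtoC (sin t) * f t p)%C ->
  dC2 V1 t p = (RtoC (cos t) * V2 t p + RtoC (sin t) * dC1 V2 t p - RtoC mu * RtoC (sin t) * h t p)%C ->
  (RtoC mu * sE' U1 U2 V1 V2 W1 W2 t p + RtoC lam * sE' V1 V2 U1 U2 W1 W2 t p)%C =
  (dC1 (Af U1 U2 V1 V2 W1 W2 f h lam mu) t p + dC2 (Bf U1 U2 V1 V2 W1 W2 f h lam mu) t p)%C.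
Proof.
  intros KU1 KU2 KV1 KV2 KW1 KW2 Kf Kh Hf1 Hf2 Hh1 Hh2 HdU HdV HdW HlU HlV.
  unfold Af, Bf. dsimp. unfold sE'.
  rewrite Hf1, Hf2, Hh1, Hh2, HdU, HdV, HdW, HlU, HlV.
  rewrite RtoC_mult. ring.
Qed.

Lemma cont2_comp G (f g : R -> R) x : cont2 G -> continuous f x -> continuous g x ->
  continuous (fun y => G (f y) (g y)) x.
Proof. intros HG Hf Hg. apply (continuous_comp_2 f g G x Hf Hg). apply HG. Qed.

Lemma cont_id x : continuous (fun y : R => y) x.
Proof. apply continuous_id. Qed.
Lemma cont_c (c x : R) : continuous (fun _ : R => c) x.
Proof. apply continuous_const. Qed.

Lemma K_cont1 G p x : K G -> continuous (fun t => G t p) x.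
Proof. intros H. apply (cont2_comp G (fun t => t) (fun _ => p)); [apply K_cont; auto | apply cont_id | apply cont_c]. Qed.
Lemma K_cont2 G t x : K G -> continuous (fun p => G t p) x.
Proof. intros H. apply (cont2_comp G (fun _ => t) (fun p => p)); [apply K_cont; auto | apply cont_c | apply cont_id]. Qed.

Lemma K_exRInt G p a b : K G -> ex_RInt (fun t => G t p) a b.
Proof. intros H; apply (ex_RInt_continuous (V:=R_CompleteNormedModule)); intros; apply K_cont1; auto. Qed.

Lemma loc_all (P : R -> Prop) x : (forall y, P y) -> locally x P.
Proof. intros H. exists (mkposreal 1 Rlt_0_1). intros; auto. Qed.

Lemma param_derive F a b p : K F ->
  is_derive (fun p => RInt (fun t => F t p) a b) p (RInt (fun t => d2 F t p) a b).
Proof.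
  intros HF.
  apply (is_derive_RInt_param (fun u t => F t u) a b p).
  - apply loc_all; intros y t _; apply K_ex2; auto.
  - intros t _. apply continuity_2d_pt_filterlim.
    pose proof (K_cont (d2 F) (K_d2 F HF) t p) as Hc.
    apply (continuous_comp_2 (fun z : R * R => snd z) (fun z : R * R => fst z)
             (fun v u => d2 F v u) (p, t)); simpl.
    apply continuous_snd. apply continuous_fst. exact Hc.
  - apply loc_all; intros y; apply K_exRInt; auto.
Qed.

Lemma param_cont F a b p : K F -> continuous (fun p => RInt (fun t => F t p) a b) p.
Proof.
  intros HF. apply (ex_derive_continuous (K:=R_AbsRing) (V:=R_NormedModule)).
  eexists; apply param_derive; auto.
Qed.

Lemma int_div0 (A B : R -> R -> R) a b c d : K A -> K B ->
  (forall p, A a p = A b p) -> (forall t, B t c = B t d) ->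
  RInt (fun p => RInt (fun t => d1 A t p + d2 B t p) a b) c d = 0.
Proof.
  intros HA HB EA EB.
  assert (E1 : forall p, RInt (fun t => d1 A t p + d2 B t p) a b = RInt (fun t => d2 B t p) a b).
  { intros p.
    rewrite (RInt_plus (V:=R_CompleteNormedModule) (fun t => d1 A t p) (fun t => d2 B t p))
      by (apply K_exRInt; apply K_d1 || apply K_d2; auto).
    assert (E2 : RInt (fun t => d1 A t p) a b = 0).
    { unfold d1. rewrite (RInt_Derive (fun t => A t p)).
      rewrite EA; lra.
      intros; apply K_ex1; auto.
      intros; apply (K_cont1 (d1 A)); apply K_d1; auto. }
    rewrite E2. change (0 + RInt (fun t : R => d2 B t p) a b = RInt (fun t : R => d2 B t p) a b). lra. }
  rewrite (RInt_ext _ (fun p => RInt (fun t => d2 B t p) a b)) by (intros; apply E1).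
  rewrite (RInt_ext _ (Derive (fun p => RInt (fun t => B t p) a b))).
  2: { intros x _. symmetry. apply is_derive_unique. apply param_derive; auto. }
  rewrite RInt_Derive.
  - rewrite (RInt_ext (fun t => B t d) (fun t => B t c)) by (intros; rewrite EB; auto). lra.
  - intros; eexists; apply param_derive; auto.
  - intros x _.
    assert (Ef : Derive (fun p => RInt (fun t => B t p) a b) = (fun p => RInt (fun t => d2 B t p) a b)).
    { apply functional_extensionality; intros y. apply is_derive_unique, param_derive; auto. }
    rewrite Ef. apply param_cont, K_d2; auto.
Qed.

Lemma RInt_scalR f a b k : ex_RInt f a b -> RInt (fun x => k * f x) a b = k * RInt f a b.
Proof. intros H; exact (RInt_scal (V:=R_CompleteNormedModule) f a b k H). Qed.
Lemma RInt_plusR f g a b : ex_RInt f a b -> ex_RInt g a b ->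
  RInt (fun x => f x + g x) a b = RInt f a b + RInt g a b.
Proof. intros H1 H2; exact (RInt_plus (V:=R_CompleteNormedModule) f g a b H1 H2). Qed.
Lemma ex_RInt_scalR f a b k : ex_RInt f a b -> ex_RInt (fun x => k * f x) a b.
Proof. intros H; exact (ex_RInt_scal (V:=R_CompleteNormedModule) f a b k H). Qed.

Lemma core (Q1 Q2 A B G1 G2 : R -> R -> R) (mu lam : R) :
  K Q1 -> K Q2 -> K A -> K B ->
  (forall p, A 0 p = A PI p) -> (forall t, B t 0 = B t (2 * PI)) ->
  (forall t p, 0 < t < PI -> G1 t p = Q1 t p) ->
  (forall t p, 0 < t < PI -> G2 t p = Q2 t p) ->
  (forall t p, 0 < t < PI -> mu * Q1 t p + lam * Q2 t p = d1 A t p + d2 B t p) ->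
  mu * RInt (fun p => RInt (fun t => G1 t p) 0 PI) 0 (2 * PI) +
  lam * RInt (fun p => RInt (fun t => G2 t p) 0 PI) 0 (2 * PI) = 0.
Proof.
  intros K1 K2 KA KB EA EB E1 E2 E.
  assert (HPI : 0 < PI) by apply PI_RGT_0.
  assert (R1 : forall p, RInt (fun t => G1 t p) 0 PI = RInt (fun t => Q1 t p) 0 PI).
  { intros p; apply RInt_ext; intros x Hx; rewrite Rmin_left, Rmax_right in Hx by lra; apply E1; lra. }
  assert (R2 : forall p, RInt (fun t => G2 t p) 0 PI = RInt (fun t => Q2 t p) 0 PI).
  { intros p; apply RInt_ext; intros x Hx; rewrite Rmin_left, Rmax_right in Hx by lra; apply E2; lra. }
  rewrite (RInt_ext (fun p => RInt (fun t => G1 t p) 0 PI) (fun p => RInt (fun t => Q1 t p) 0 PI))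
    by (intros; apply R1).
  rewrite (RInt_ext (fun p => RInt (fun t => G2 t p) 0 PI) (fun p => RInt (fun t => Q2 t p) 0 PI))
    by (intros; apply R2).
  assert (X1 : ex_RInt (fun p => RInt (fun t => Q1 t p) 0 PI) 0 (2 * PI))
    by (apply (ex_RInt_continuous (V:=R_CompleteNormedModule)); intros; apply param_cont; auto).
  assert (X2 : ex_RInt (fun p => RInt (fun t => Q2 t p) 0 PI) 0 (2 * PI))
    by (apply (ex_RInt_continuous (V:=R_CompleteNormedModule)); intros; apply param_cont; auto).
  rewrite <- (RInt_scalR _ _ _ mu X1).
  rewrite <- (RInt_scalR _ _ _ lam X2).
  rewrite <- RInt_plusR by (apply ex_RInt_scalR; auto).
  transitivity (RInt (fun p => RInt (fun t => d1 A t p + d2 B t p) 0 PI) 0 (2 * PI));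
    [ | apply int_div0; auto].
  apply RInt_ext; intros p _.
  rewrite <- (RInt_scalR (fun t => Q1 t p)) by (apply K_exRInt; auto).
  rewrite <- (RInt_scalR (fun t => Q2 t p)) by (apply K_exRInt; auto).
  rewrite <- RInt_plusR by (apply ex_RInt_scalR, K_exRInt; auto).
  apply RInt_ext; intros x Hx; rewrite Rmin_left, Rmax_right in Hx by lra.
  apply E; lra.
Qed.

Lemma prfacts (pr : C -> R) : (pr = fst \/ pr = snd) ->
  (forall z r, pr (z * RtoC r)%C = pr z * r) /\
  (forall z1 z2 m l, pr (RtoC m * z1 + RtoC l * z2)%C = m * pr z1 + l * pr z2) /\
  (forall g x y, pr (dC1 g x y) = d1 (fun a b => pr (g a b)) x y) /\
  (forall g x y, pr (dC2 g x y) = d2 (fun a b => pr (g a b)) x y) /\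
  (forall g, KC g -> K (fun a b => pr (g a b))) /\
  (forall z1 z2, pr (z1 + z2)%C = pr z1 + pr z2).
Proof.
  intros [-> | ->]; repeat split; intros; autorewrite with creal; try ring; try reflexivity;
  destruct H; auto.
Qed.

Lemma KC_sE' U1 U2 V1 V2 W1 W2 : KC U1 -> KC U2 -> KC V1 -> KC V2 -> KC W1 -> KC W2 ->
  KC (sE' U1 U2 V1 V2 W1 W2).
Proof. intros; unfold sE'; kc. Qed.
Lemma KC_Af U1 U2 V1 V2 W1 W2 f h lam mu : KC U1 -> KC U2 -> KC V1 -> KC V2 -> KC W1 -> KC W2 ->
  KC f -> KC h -> KC (Af U1 U2 V1 V2 W1 W2 f h lam mu).
Proof. intros; unfold Af; kc. Qed.
Lemma KC_Bf U1 U2 V1 V2 W1 W2 f h lam mu : KC U1 -> KC U2 -> KC V1 -> KC V2 -> KC W1 -> KC W2 ->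
  KC f -> KC h -> KC (Bf U1 U2 V1 V2 W1 W2 f h lam mu).
Proof. intros; unfold Bf; kc. Qed.

Lemma F1_per X t : F1 X t (2 * PI) = F1 X t 0.
Proof. unfold F1, sph, e_th. rewrite cos_2PI, sin_2PI, cos_0, sin_0. reflexivity. Qed.
Lemma F2_per X t : F2 X t (2 * PI) = F2 X t 0.
Proof. unfold F2, sph, ephh. rewrite cos_2PI, sin_2PI, cos_0, sin_0. reflexivity. Qed.
Lemma coord_per (f : pt -> C) t : coord f t (2 * PI) = coord f t 0.
Proof. unfold coord, sph. rewrite cos_2PI, sin_2PI, cos_0, sin_0. reflexivity. Qed.

Lemma ortho (l k : nat) (f h : pt -> C) (u v W : vfield) :
  in_Y l f -> in_Y k h -> is_sgrad u f -> is_sgrad v h -> in_SVect W ->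
  (RtoC (INR k * (INR k + 1)) * ip (comps u) (bracket (comps v) (comps W)) +
   RtoC (INR l * (INR l + 1)) * ip (comps v) (bracket (comps u) (comps W)))%C = RtoC 0.
Proof.
  intros [Sf Lf] [Sh Lh] [[Su [_ Du]] Gu] [[Sv [_ Dv]] Gv] [SW [_ DW]].
  set (lam := INR l * (INR l + 1)). set (mu := INR k * (INR k + 1)).
  pose proof (KC_sm f Sf) as Kf. pose proof (KC_sm h Sh) as Kh.
  change (fun t p => f (sph t p)) with (coord f) in Kf.
  change (fun t p => h (sph t p)) with (coord h) in Kh.
  pose proof (KC_F1 u Su) as KU1. pose proof (KC_F2 u Su) as KU2.
  pose proof (KC_F1 v Sv) as KV1. pose proof (KC_F2 v Sv) as KV2.
  pose proof (KC_F1 W SW) as KW1. pose proof (KC_F2 W SW) as KW2.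
  assert (Hpr : forall pr : C -> R, (pr = fst \/ pr = snd) ->
    mu * RInt (fun p => RInt (fun t => pr (gmet (comps u) (bracket (comps v) (comps W)) t p) * sin t) 0 PI) 0 (2 * PI) +
    lam * RInt (fun p => RInt (fun t => pr (gmet (comps v) (bracket (comps u) (comps W)) t p) * sin t) 0 PI) 0 (2 * PI) = 0).
  { intros pr Hpr. destruct (prfacts pr Hpr) as [P1 [P2 [P3 [P4 [P5 P6]]]]].
    apply (core (fun t p => pr (sE' (F1 u) (F2 u) (F1 v) (F2 v) (F1 W) (F2 W) t p))
                (fun t p => pr (sE' (F1 v) (F2 v) (F1 u) (F2 u) (F1 W) (F2 W) t p))
                (fun t p => pr (Af (F1 u) (F2 u) (F1 v) (F2 v) (F1 W) (F2 W) (coord f) (coord h) lam mu t p))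
                (fun t p => pr (Bf (F1 u) (F2 u) (F1 v) (F2 v) (F1 W) (F2 W) (coord f) (coord h) lam mu t p))).
    - apply P5, KC_sE'; auto.
    - apply P5, KC_sE'; auto.
    - apply P5, KC_Af; auto.
    - apply P5, KC_Bf; auto.
    - intros p. unfold Af. rewrite sin_0, sin_PI. f_equal. ring.
    - intros t. unfold Bf. rewrite !F1_per, !F2_per, !coord_per. reflexivity.
    - intros t p Ht. rewrite <- P1. f_equal. apply gmet_sE; auto.
    - intros t p Ht. rewrite <- P1. f_equal. apply gmet_sE; auto.
    - intros t p Ht. rewrite <- P2, <- P3, <- P4, <- P6. f_equal.
      apply key_alg; auto.
      + apply sg2; auto.
      + apply sg1; auto.
      + apply sg2; auto.
      + apply sg1; auto.
      + apply divc; auto.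
      + apply divc; auto.
      + apply divc; auto.
      + apply lapc; auto.
      + apply lapc; auto. }
  pose proof (Hpr fst (or_introl eq_refl)) as H1.
  pose proof (Hpr snd (or_intror eq_refl)) as H2.
  unfold ip, int_S2, Re, Im. apply injective_projections; autorewrite with creal; lra.
Qed.

Lemma iter_lin L a b g1 g2 : smooth2 g1 -> smooth2 g2 ->
  iter_d L (fun x y => a * g1 x y + b * g2 x y) =
  (fun x y => a * iter_d L g1 x y + b * iter_d L g2 x y).
Proof.
  intros H1 H2. induction L as [|c L IH]; simpl; auto.
  rewrite IH. destruct c; apply functional_extensionality; intros x;
    apply functional_extensionality; intros y.
  - unfold d1. rewrite (Derive_plus (fun s => a * iter_d L g1 s y) (fun s => b * iter_d L g2 s y)).
    rewrite !Derive_scal; auto.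
    apply ex_derive_scal, (H1 L x y). apply ex_derive_scal, (H2 L x y).
  - unfold d2. rewrite (Derive_plus (fun s => a * iter_d L g1 x s) (fun s => b * iter_d L g2 x s)).
    rewrite !Derive_scal; auto.
    apply ex_derive_scal, (H1 L x y). apply ex_derive_scal, (H2 L x y).
Qed.

Lemma cont_scalR (a : R) (f : R * R -> R) z : continuous f z -> continuous (fun w => a * f w) z.
Proof.
  intros H. apply (continuous_scal (fun _ : R * R => a) f z); auto. apply continuous_const.
Qed.

Lemma smooth2_lin a b g1 g2 : smooth2 g1 -> smooth2 g2 ->
  smooth2 (fun x y => a * g1 x y + b * g2 x y).
Proof.
  intros H1 H2 L x y. rewrite iter_lin; auto.
  destruct (H1 L x y) as [A1 [B1 C1]]. destruct (H2 L x y) as [A2 [B2 C2]].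
  repeat split.
  - apply (ex_derive_plus (fun s => a * iter_d L g1 s y) (fun s => b * iter_d L g2 s y));
      apply ex_derive_scal; auto.
  - apply (ex_derive_plus (fun s => a * iter_d L g1 x s) (fun s => b * iter_d L g2 x s));
      apply ex_derive_scal; auto.
  - apply (continuous_plus (fun z : R * R => a * iter_d L g1 (fst z) (snd z))
                           (fun z : R * R => b * iter_d L g2 (fst z) (snd z)));
    apply cont_scalR; auto.
Qed.

Definition lc (m l : R) (X Y : vfield) : vfield := fun q =>
  ((RtoC m * cx (X q) + RtoC l * cx (Y q), RtoC m * cy (X q) + RtoC l * cy (Y q)),
   RtoC m * cz (X q) + RtoC l * cz (Y q))%C.
Definition cjf (X : vfield) : vfield := fun q =>
  ((Cconj (cx (X q)), Cconj (cy (X q))), Cconj (cz (X q))).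

Lemma smoothC_cl m l (F G : R -> R -> C) : smoothC F -> smoothC G ->
  smoothC (fun x y => Cconj (RtoC m * F x y + RtoC l * G x y))%C.
Proof.
  intros [A1 B1] [A2 B2]. split.
  - replace (fun x y => Re (Cconj (RtoC m * F x y + RtoC l * G x y))%C)
      with (fun x y => m * Re (F x y) + l * Re (G x y)).
    apply smooth2_lin; auto.
    apply functional_extensionality; intros x; apply functional_extensionality; intros y.
    unfold Re, Cconj. autorewrite with creal. ring.
  - replace (fun x y => Im (Cconj (RtoC m * F x y + RtoC l * G x y))%C)
      with (fun x y => (- m) * Im (F x y) + (- l) * Im (G x y)).
    apply smooth2_lin; auto.
    apply functional_extensionality; intros x; apply functional_extensionality; intros y.
    unfold Im, Cconj. autorewrite with creal. ring.
Qed.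

Lemma smoothS2_cl m l (F G : pt -> C) : smooth_S2 F -> smooth_S2 G ->
  smooth_S2 (fun q => Cconj (RtoC m * F q + RtoC l * G q))%C.
Proof.
  intros [A1 B1] [A2 B2]. split.
  - apply (smoothC_cl m l (fun t p => F (sph t p)) (fun t p => G (sph t p))); auto.
  - apply (smoothC_cl m l (fun t p => F (sph2 t p)) (fun t p => G (sph2 t p))); auto.
Qed.

Lemma smooth_cl m l X Y : smooth_vf X -> smooth_vf Y -> smooth_vf (cjf (lc m l X Y)).
Proof.
  intros [A1 [B1 C1]] [A2 [B2 C2]]. split; [|split].
  - exact (smoothS2_cl m l (fun q => cx (X q)) (fun q => cx (Y q)) A1 A2).
  - exact (smoothS2_cl m l (fun q => cy (X q)) (fun q => cy (Y q)) B1 B2).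
  - exact (smoothS2_cl m l (fun q => cz (X q)) (fun q => cz (Y q)) C1 C2).
Qed.

Lemma dotR_cl m l X Y q e : dotR (cjf (lc m l X Y) q) e =
  Cconj (RtoC m * dotR (X q) e + RtoC l * dotR (Y q) e)%C.
Proof. unfold dotR, cjf, lc, cx, cy, cz, Cconj; cbn [fst snd]. ceq; ring. Qed.

Lemma tangent_cl m l X Y : tangent X -> tangent Y -> tangent (cjf (lc m l X Y)).
Proof.
  intros H1 H2 t p. rewrite dotR_cl, H1, H2. unfold Cconj. ceq; ring.
Qed.

Lemma F1_cl m l X Y t p : F1 (cjf (lc m l X Y)) t p = Cconj (RtoC m * F1 X t p + RtoC l * F1 Y t p)%C.
Proof. unfold F1. apply dotR_cl. Qed.
Lemma F2_cl m l X Y t p : F2 (cjf (lc m l X Y)) t p = Cconj (RtoC m * F2 X t p + RtoC l * F2 Y t p)%C.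
Proof. unfold F2. apply dotR_cl. Qed.

Lemma dC1_cl m l (g h : R -> R -> C) x y : KC g -> KC h ->
  dC1 (fun a b => Cconj (RtoC m * g a b + RtoC l * h a b))%C x y =
  Cconj (RtoC m * dC1 g x y + RtoC l * dC1 h x y)%C.
Proof.
  intros [A1 B1] [A2 B2]. unfold dC1, Cconj, Re, Im. ceq.
  - rewrite (d1_ext _ (fun a b => m * fst (g a b) + l * fst (h a b)))
      by (intros; autorewrite with creal; ring).
    rewrite (d1_plus (fun a b => m * fst (g a b)) (fun a b => l * fst (h a b))) by kc.
    rewrite (d1_mult (fun _ _ => m) (fun a b => fst (g a b))) by kc.
    rewrite (d1_mult (fun _ _ => l) (fun a b => fst (h a b))) by kc.
    rewrite !d1_c. ring.
  - rewrite (d1_ext _ (fun a b => (- m) * snd (g a b) + (- l) * snd (h a b)))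
      by (intros; autorewrite with creal; ring).
    rewrite (d1_plus (fun a b => (- m) * snd (g a b)) (fun a b => (- l) * snd (h a b))) by kc.
    rewrite (d1_mult (fun _ _ => - m) (fun a b => snd (g a b))) by kc.
    rewrite (d1_mult (fun _ _ => - l) (fun a b => snd (h a b))) by kc.
    rewrite !d1_c. ring.
Qed.
Lemma dC2_cl m l (g h : R -> R -> C) x y : KC g -> KC h ->
  dC2 (fun a b => Cconj (RtoC m * g a b + RtoC l * h a b))%C x y =
  Cconj (RtoC m * dC2 g x y + RtoC l * dC2 h x y)%C.
Proof.
  intros [A1 B1] [A2 B2]. unfold dC2, Cconj, Re, Im. ceq.
  - rewrite (d2_ext _ (fun a b => m * fst (g a b) + l * fst (h a b)))
      by (intros; autorewrite with creal; ring).
    rewrite (d2_plus (fun a b => m * fst (g a b)) (fun a b => l * fst (h a b))) by kc.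
    rewrite (d2_mult (fun _ _ => m) (fun a b => fst (g a b))) by kc.
    rewrite (d2_mult (fun _ _ => l) (fun a b => fst (h a b))) by kc.
    rewrite !d2_c. ring.
  - rewrite (d2_ext _ (fun a b => (- m) * snd (g a b) + (- l) * snd (h a b)))
      by (intros; autorewrite with creal; ring).
    rewrite (d2_plus (fun a b => (- m) * snd (g a b)) (fun a b => (- l) * snd (h a b))) by kc.
    rewrite (d2_mult (fun _ _ => - m) (fun a b => snd (g a b))) by kc.
    rewrite (d2_mult (fun _ _ => - l) (fun a b => snd (h a b))) by kc.
    rewrite !d2_c. ring.
Qed.

Definition Sx (X : vfield) t p : C :=
  (RtoC (cos t) * F1 X t p + RtoC (sin t) * dC1 (F1 X) t p + dC2 (F2 X) t p)%C.

Lemma div_form X t p : smooth_vf X -> chart t -> div (comps X) t p = (RtoC (/ sin t) * Sx X t p)%C.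
Proof.
  intros HX Ht. unfold div, Sx. pose proof (chart_sin t Ht) as Hs0.
  pose proof (KC_F1 X HX) as K1.
  change (ca (comps X)) with (F1 X).
  rewrite (dC1_mult (fun a _ => RtoC (sin a)) (F1 X)) by kc.
  rewrite dC1_sin.
  rewrite (dC2_loc _ (F2 X)).
  2: { intros b. rewrite cb_comps by auto. rewrite RtoC_inv by auto. field. apply RtoC_neq; auto. }
  reflexivity.
Qed.

Lemma Sx_zero X t p : smooth_vf X -> chart t -> div (comps X) t p = RtoC 0 -> Sx X t p = RtoC 0.
Proof.
  intros HX Ht H. rewrite div_form in H by auto. pose proof (chart_sin t Ht) as Hs0.
  rewrite RtoC_inv in H by auto.
  replace (Sx X t p) with (RtoC (sin t) * (/ RtoC (sin t) * Sx X t p))%C.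
  rewrite H; ring. field. apply RtoC_neq; auto.
Qed.

Lemma Sx_cl m l X Y t p : smooth_vf X -> smooth_vf Y ->
  Sx (cjf (lc m l X Y)) t p = Cconj (RtoC m * Sx X t p + RtoC l * Sx Y t p)%C.
Proof.
  intros HX HY. unfold Sx.
  pose proof (KC_F1 X HX). pose proof (KC_F2 X HX). pose proof (KC_F1 Y HY). pose proof (KC_F2 Y HY).
  rewrite (dC1_ext (F1 (cjf (lc m l X Y))) (fun a b => Cconj (RtoC m * F1 X a b + RtoC l * F1 Y a b))%C)
    by (intros; apply F1_cl).
  rewrite (dC2_ext (F2 (cjf (lc m l X Y))) (fun a b => Cconj (RtoC m * F2 X a b + RtoC l * F2 Y a b))%C)
    by (intros; apply F2_cl).
  rewrite dC1_cl, dC2_cl by auto. rewrite F1_cl.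
  unfold Cconj. ceq; ring.
Qed.

Lemma in_SVect_cl m l X Y : in_SVect X -> in_SVect Y -> in_SVect (cjf (lc m l X Y)).
Proof.
  intros [SX [TX DX]] [SY [TY DY]]. split; [|split].
  - apply smooth_cl; auto.
  - apply tangent_cl; auto.
  - intros t p Ht. rewrite div_form; auto. 2: apply smooth_cl; auto.
    rewrite Sx_cl by auto. rewrite !Sx_zero; auto. unfold Cconj; ceq; ring.
Qed.

Lemma cont_eps (g : R -> R) x eps : continuous g x -> 0 < eps ->
  exists d, 0 < d /\ forall y, Rabs (y - x) < d -> Rabs (g y - g x) < eps.
Proof.
  intros Hc He. pose proof (proj1 (filterlim_locally g (g x)) Hc (mkposreal eps He)) as H.
  destruct H as [d Hd]. exists d; split; [apply cond_pos|].
  intros y Hy. assert (B : ball x d y).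
  { unfold ball; simpl. unfold AbsRing_ball, abs, minus, plus, opp; simpl. exact Hy. }
  specialize (Hd y B). unfold ball in Hd; simpl in Hd.
  unfold AbsRing_ball, abs, minus, plus, opp in Hd; simpl in Hd. exact Hd.
Qed.

Lemma exRInt_c (g : R -> R) a b : (forall x, continuous g x) -> ex_RInt g a b.
Proof. intros H; apply (ex_RInt_continuous (V:=R_CompleteNormedModule)); auto. Qed.

Lemma RInt_pos_pt (g : R -> R) a b x : (forall y, continuous g y) ->
  (forall y, a <= y <= b -> 0 <= g y) -> a < x < b -> 0 < g x -> 0 < RInt g a b.
Proof.
  intros Hc Hp Hx Hg.
  destruct (cont_eps g x (g x / 2) (Hc x)) as [d [Hd Hd']]; [lra|].
  set (e := Rmin d (Rmin (x - a) (b - x)) / 2).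
  assert (He : 0 < e).
  { unfold e. apply Rmult_lt_0_compat; [|lra]. apply Rmin_pos; auto. apply Rmin_pos; lra. }
  assert (He1 : e < d) by (unfold e; pose proof (Rmin_l d (Rmin (x - a) (b - x))); lra).
  assert (He2 : e < x - a) by (unfold e; pose proof (Rmin_r d (Rmin (x - a) (b - x)));
                               pose proof (Rmin_l (x - a) (b - x)); pose proof (Rmin_pos d (Rmin (x-a) (b-x)));
                               lra).
  assert (He3 : e < b - x) by (unfold e; pose proof (Rmin_r d (Rmin (x - a) (b - x)));
                               pose proof (Rmin_r (x - a) (b - x)); lra).
  rewrite <- (RInt_Chasles (V:=R_CompleteNormedModule) g a (x - e) b) by (apply exRInt_c; auto).
  rewrite <- (RInt_Chasles (V:=R_CompleteNormedModule) g (x - e) (x + e) b) by (apply exRInt_c; auto).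
  assert (I1 : 0 <= RInt g a (x - e)).
  { apply RInt_ge_0; [lra | apply exRInt_c; auto | intros; apply Hp; lra]. }
  assert (I3 : 0 <= RInt g (x + e) b).
  { apply RInt_ge_0; [lra | apply exRInt_c; auto | intros; apply Hp; lra]. }
  assert (I2 : 0 < RInt g (x - e) (x + e)).
  { apply RInt_gt_0; [lra | | intros; apply Hc].
    intros y Hy. assert (Rabs (y - x) < d) by (apply Rabs_def1; lra).
    specialize (Hd' y H). apply Rabs_def2 in Hd'. lra. }
  change (0 < RInt g a (x - e) + (RInt g (x - e) (x + e) + RInt g (x + e) b)). lra.
Qed.

Lemma pos2 (N : R -> R -> R) : K N -> (forall t p, 0 <= N t p) ->
  RInt (fun p => RInt (fun t => N t p * sin t) 0 PI) 0 (2 * PI) = 0 ->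
  forall t p, 0 < t < PI -> 0 < p < 2 * PI -> N t p = 0.
Proof.
  intros KN Hp HI t p Ht Hpp.
  assert (HPI : 0 < PI) by apply PI_RGT_0.
  destruct (Rle_lt_or_eq_dec 0 (N t p) (Hp t p)) as [Hlt | Heq]; [|auto].
  exfalso.
  assert (KM : K (fun t p => N t p * sin t)) by (apply K_mult; auto; apply K_sin1).
  assert (G0 : forall p, 0 <= RInt (fun t => N t p * sin t) 0 PI).
  { intros q. apply RInt_ge_0; [lra | apply (K_exRInt (fun t p => N t p * sin t)); auto |].
    intros x Hx. apply Rmult_le_pos; auto. apply Rlt_le, sin_gt_0; lra. }
  assert (Gp : 0 < RInt (fun t => N t p * sin t) 0 PI).
  { apply (RInt_pos_pt _ 0 PI t); auto.
    - intros y. apply (K_cont1 (fun t p => N t p * sin t)); auto.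
    - intros y Hy. apply Rmult_le_pos; auto. apply sin_ge_0; lra.
    - apply Rmult_lt_0_compat; auto. apply sin_gt_0; lra. }
  assert (0 < RInt (fun p => RInt (fun t => N t p * sin t) 0 PI) 0 (2 * PI)).
  { apply (RInt_pos_pt _ 0 (2 * PI) p); auto.
    intros y. apply (param_cont (fun t p => N t p * sin t)); auto. }
  lra.
Qed.

Lemma closure1 (g : R -> R) a b : a < b -> (forall x, continuous g x) ->
  (forall x, a < x < b -> g x = 0) -> forall x, a <= x <= b -> g x = 0.
Proof.
  intros Hab Hc H0 x Hx.
  destruct (Req_dec x a) as [->|Na]; [|destruct (Req_dec x b) as [->|Nb]; [|apply H0; lra]].
  - destruct (Req_dec (g a) 0) as [E|E]; auto. exfalso.
    destruct (cont_eps g a (Rabs (g a)) (Hc a)) as [d [Hd Hd']]. apply Rabs_pos_lt; auto.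
    set (y := a + Rmin d (b - a) / 2).
    assert (Hm : 0 < Rmin d (b - a)) by (apply Rmin_pos; lra).
    pose proof (Rmin_l d (b - a)); pose proof (Rmin_r d (b - a)).
    assert (Hy : Rabs (y - a) < d) by (unfold y; rewrite Rabs_right; lra).
    specialize (Hd' y Hy). rewrite (H0 y) in Hd' by (unfold y; lra).
    replace (0 - g a) with (- g a) in Hd' by ring. rewrite Rabs_Ropp in Hd'. lra.
  - destruct (Req_dec (g b) 0) as [E|E]; auto. exfalso.
    destruct (cont_eps g b (Rabs (g b)) (Hc b)) as [d [Hd Hd']]. apply Rabs_pos_lt; auto.
    set (y := b - Rmin d (b - a) / 2).
    assert (Hm : 0 < Rmin d (b - a)) by (apply Rmin_pos; lra).
    pose proof (Rmin_l d (b - a)); pose proof (Rmin_r d (b - a)).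
    assert (Hy : Rabs (y - b) < d) by (unfold y; rewrite Rabs_left; lra).
    specialize (Hd' y Hy). rewrite (H0 y) in Hd' by (unfold y; lra).
    replace (0 - g b) with (- g b) in Hd' by ring. rewrite Rabs_Ropp in Hd'. lra.
Qed.

Lemma cos_perZ x z : cos (x + 2 * IZR z * PI) = cos x.
Proof.
  destruct z as [|n|n].
  - f_equal; simpl; ring.
  - replace (IZR (Z.pos n)) with (INR (Pos.to_nat n)) by (rewrite INR_IZR_INZ, positive_nat_Z; reflexivity).
    apply cos_period.
  - rewrite IZR_NEG.
    replace (IZR (Z.pos n)) with (INR (Pos.to_nat n)) by (rewrite INR_IZR_INZ, positive_nat_Z; reflexivity).
    rewrite <- (cos_period (x + 2 * - INR (Pos.to_nat n) * PI) (Pos.to_nat n)).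
    f_equal; ring.
Qed.
Lemma sin_perZ x z : sin (x + 2 * IZR z * PI) = sin x.
Proof.
  destruct z as [|n|n].
  - f_equal; simpl; ring.
  - replace (IZR (Z.pos n)) with (INR (Pos.to_nat n)) by (rewrite INR_IZR_INZ, positive_nat_Z; reflexivity).
    apply sin_period.
  - rewrite IZR_NEG.
    replace (IZR (Z.pos n)) with (INR (Pos.to_nat n)) by (rewrite INR_IZR_INZ, positive_nat_Z; reflexivity).
    rewrite <- (sin_period (x + 2 * - INR (Pos.to_nat n) * PI) (Pos.to_nat n)).
    f_equal; ring.
Qed.

Lemma red2pi x : exists z, 0 <= x + 2 * IZR z * PI < 2 * PI.
Proof.
  assert (HPI : 0 < PI) by apply PI_RGT_0.
  destruct (archimed (x / (2 * PI))) as [H1 H2].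
  exists (1 - up (x / (2 * PI)))%Z. rewrite minus_IZR.
  set (u := IZR (up (x / (2 * PI)))) in *.
  assert (E : x = 2 * PI * (x / (2 * PI))) by (field; lra).
  split.
  - rewrite E at 1. nra.
  - rewrite E at 1. nra.
Qed.

Lemma sph_perp t p z : sph t (p + 2 * IZR z * PI) = sph t p.
Proof. unfold sph. rewrite cos_perZ, sin_perZ. reflexivity. Qed.
Lemma sph_pert t p z : sph (t + 2 * IZR z * PI) p = sph t p.
Proof. unfold sph. rewrite cos_perZ, sin_perZ. reflexivity. Qed.
Lemma sph_flip t p : sph (2 * PI - t) (p + PI) = sph t p.
Proof.
  unfold sph. rewrite neg_sin, neg_cos.
  replace (2 * PI - t) with (- t + 2 * IZR 1 * PI) by (simpl; ring).
  rewrite cos_perZ, sin_perZ, sin_neg, cos_neg. f_equal; try f_equal; ring.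
Qed.

Lemma extend (G : pt -> R) : K (fun t p => G (sph t p)) ->
  (forall t p, 0 < t < PI -> 0 < p < 2 * PI -> G (sph t p) = 0) ->
  forall t p, G (sph t p) = 0.
Proof.
  intros KG H0.
  assert (HPI : 0 < PI) by apply PI_RGT_0.
  assert (S1 : forall t p, 0 <= t <= PI -> 0 < p < 2 * PI -> G (sph t p) = 0).
  { intros t p Ht Hp. apply (closure1 (fun t => G (sph t p)) 0 PI); auto.
    - intros; apply (K_cont1 (fun t p => G (sph t p))); auto. }
  assert (S2 : forall t p, 0 <= t <= PI -> 0 <= p <= 2 * PI -> G (sph t p) = 0).
  { intros t p Ht Hp. apply (closure1 (fun p => G (sph t p)) 0 (2 * PI)); auto; try lra.
    intros; apply (K_cont2 (fun t p => G (sph t p))); auto. }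
  assert (S3 : forall t p, 0 <= t <= PI -> G (sph t p) = 0).
  { intros t p Ht. destruct (red2pi p) as [z Hz].
    rewrite <- (sph_perp t p z). apply S2; lra. }
  intros t p. destruct (red2pi t) as [z Hz]. rewrite <- (sph_pert t p z).
  set (t' := t + 2 * IZR z * PI) in *.
  destruct (Rle_or_lt t' PI) as [Hle|Hlt].
  - apply S3; lra.
  - rewrite <- sph_flip. apply S3; lra.
Qed.

Lemma gmet_F X Y t p : chart t ->
  gmet (comps X) (comps Y) t p = (F1 X t p * F1 Y t p + F2 X t p * F2 Y t p)%C.
Proof.
  intros Ht. pose proof (chart_sin t Ht) as Hs0. unfold gmet.
  rewrite !cb_comps by auto. change (ca (comps X)) with (F1 X). change (ca (comps Y)) with (F1 Y).
  toC. field. apply RtoC_neq; auto. all: try apply pow_nonzero; auto.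
Qed.

Lemma lin2 (Q1 Q2 G1 G2 : R -> R -> R) (mu lam : R) : K Q1 -> K Q2 ->
  (forall t p, 0 < t < PI -> G1 t p = Q1 t p) ->
  (forall t p, 0 < t < PI -> G2 t p = Q2 t p) ->
  mu * RInt (fun p => RInt (fun t => G1 t p) 0 PI) 0 (2 * PI) +
  lam * RInt (fun p => RInt (fun t => G2 t p) 0 PI) 0 (2 * PI) =
  RInt (fun p => RInt (fun t => mu * Q1 t p + lam * Q2 t p) 0 PI) 0 (2 * PI).
Proof.
  intros K1 K2 E1 E2.
  assert (HPI : 0 < PI) by apply PI_RGT_0.
  assert (R1 : forall p, RInt (fun t => G1 t p) 0 PI = RInt (fun t => Q1 t p) 0 PI).
  { intros p; apply RInt_ext; intros x Hx; rewrite Rmin_left, Rmax_right in Hx by lra; apply E1; lra. }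
  assert (R2 : forall p, RInt (fun t => G2 t p) 0 PI = RInt (fun t => Q2 t p) 0 PI).
  { intros p; apply RInt_ext; intros x Hx; rewrite Rmin_left, Rmax_right in Hx by lra; apply E2; lra. }
  rewrite (RInt_ext (fun p => RInt (fun t => G1 t p) 0 PI) (fun p => RInt (fun t => Q1 t p) 0 PI))
    by (intros; apply R1).
  rewrite (RInt_ext (fun p => RInt (fun t => G2 t p) 0 PI) (fun p => RInt (fun t => Q2 t p) 0 PI))
    by (intros; apply R2).
  assert (X1 : ex_RInt (fun p => RInt (fun t => Q1 t p) 0 PI) 0 (2 * PI))
    by (apply (ex_RInt_continuous (V:=R_CompleteNormedModule)); intros; apply param_cont; auto).
  assert (X2 : ex_RInt (fun p => RInt (fun t => Q2 t p) 0 PI) 0 (2 * PI))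
    by (apply (ex_RInt_continuous (V:=R_CompleteNormedModule)); intros; apply param_cont; auto).
  rewrite <- (RInt_scalR _ _ _ mu X1).
  rewrite <- (RInt_scalR _ _ _ lam X2).
  rewrite <- RInt_plusR by (apply ex_RInt_scalR; auto).
  apply RInt_ext; intros p _.
  rewrite <- (RInt_scalR (fun t => Q1 t p)) by (apply K_exRInt; auto).
  rewrite <- (RInt_scalR (fun t => Q2 t p)) by (apply K_exRInt; auto).
  rewrite <- RInt_plusR by (apply ex_RInt_scalR, K_exRInt; auto).
  reflexivity.
Qed.

Lemma frame (a : C * C * C) t p :
  dotR a (e_th t p) = RtoC 0 -> dotR a (ephh p) = RtoC 0 -> dotR a (sph t p) = RtoC 0 ->
  cx a = RtoC 0 /\ cy a = RtoC 0 /\ cz a = RtoC 0.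
Proof.
  destruct a as [[[x1 x2] [y1 y2]] [z1 z2]].
  unfold dotR, e_th, ephh, sph, cx, cy, cz; cbn [fst snd].
  intros H1 H2 H3.
  pose proof (f_equal fst H1) as A1; pose proof (f_equal snd H1) as B1.
  pose proof (f_equal fst H2) as A2; pose proof (f_equal snd H2) as B2.
  pose proof (f_equal fst H3) as A3; pose proof (f_equal snd H3) as B3.
  autorewrite with creal in A1, B1, A2, B2, A3, B3.
  pose proof (sin2_cos2 t) as T. pose proof (sin2_cos2 p) as P.
  unfold Rsqr in T, P.
  repeat split; apply injective_projections; autorewrite with creal; cbn [fst snd]; nsatz.
Qed.

Lemma sq4 a b c d : a * a + b * b + c * c + d * d = 0 -> a = 0 /\ b = 0 /\ c = 0 /\ d = 0.
Proof.
  intros H. pose proof (Rle_0_sqr a); pose proof (Rle_0_sqr b); pose proof (Rle_0_sqr c);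
  pose proof (Rle_0_sqr d). unfold Rsqr in *.
  assert (a * a = 0) by lra. assert (b * b = 0) by lra. assert (c * c = 0) by lra. assert (d * d = 0) by lra.
  repeat split; apply Rsqr_0_uniq; unfold Rsqr; auto.
Qed.

Lemma F1_lc m l X Y t p : F1 (lc m l X Y) t p = (RtoC m * F1 X t p + RtoC l * F1 Y t p)%C.
Proof. unfold F1, dotR, lc, cx, cy, cz; cbn [fst snd]. ceq; ring. Qed.
Lemma F2_lc m l X Y t p : F2 (lc m l X Y) t p = (RtoC m * F2 X t p + RtoC l * F2 Y t p)%C.
Proof. unfold F2, dotR, lc, cx, cy, cz; cbn [fst snd]. ceq; ring. Qed.
Lemma dotR_lc m l X Y q e : dotR (lc m l X Y q) e = (RtoC m * dotR (X q) e + RtoC l * dotR (Y q) e)%C.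
Proof. unfold dotR, lc, cx, cy, cz; cbn [fst snd]. ceq; ring. Qed.
Lemma FR_lc m l X Y q : tangent X -> tangent Y -> dotR (lc m l X Y (sph (fst q) (snd q))) (sph (fst q) (snd q)) = RtoC 0.
Proof.
  intros H1 H2. rewrite dotR_lc, H1, H2. ring.
Qed.

Theorem lemma5 (l k : nat) (hl : (1 <= l)%nat) (hk : (1 <= k)%nat)
  (f h : pt -> C) (u v : vfield)
  (hf : in_Y l f) (hh : in_Y k h)
  (hu : is_sgrad u f) (hv : is_sgrad v h)
  (Buv Bvu : vfield) (hB1 : is_B u v Buv) (hB2 : is_B v u Bvu) :
  forall t p : R,
    vscale (RtoC (INR k * (INR k + 1))) (Buv (sph t p)) =
    vscale (RtoC (- (INR l * (INR l + 1)))) (Bvu (sph t p)).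
Proof.
  set (lam := INR l * (INR l + 1)). set (mu := INR k * (INR k + 1)).
  destruct hB1 as [SB1 EB1]. destruct hB2 as [SB2 EB2].
  set (D := lc mu lam Buv Bvu). set (W := cjf D).
  assert (SW : in_SVect W) by (apply in_SVect_cl; auto).
  pose proof (ortho l k f h u v W hf hh hu hv SW) as HO.
  rewrite <- (EB1 W SW), <- (EB2 W SW) in HO.
  fold lam mu in HO.
  destruct SB1 as [S1 [T1 _]]. destruct SB2 as [S2 [T2 _]].
  destruct SW as [SW' _].
  pose proof (KC_F1 Buv S1) as K11. pose proof (KC_F2 Buv S1) as K12.
  pose proof (KC_F1 Bvu S2) as K21. pose proof (KC_F2 Bvu S2) as K22.
  pose proof (KC_F1 W SW') as KW1. pose proof (KC_F2 W SW') as KW2.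
  set (A1 := fun t p => (RtoC mu * F1 Buv t p + RtoC lam * F1 Bvu t p)%C).
  set (A2 := fun t p => (RtoC mu * F2 Buv t p + RtoC lam * F2 Bvu t p)%C).
  assert (KA1 : KC A1) by (unfold A1; kc). assert (KA2 : KC A2) by (unfold A2; kc).
  set (N := fun t p => Re (A1 t p) * Re (A1 t p) + Im (A1 t p) * Im (A1 t p)
                     + Re (A2 t p) * Re (A2 t p) + Im (A2 t p) * Im (A2 t p)).
  assert (KN : K N).
  { destruct KA1, KA2. unfold N. kc. }
  assert (HI : RInt (fun p => RInt (fun t => N t p * sin t) 0 PI) 0 (2 * PI) = 0).
  { apply (f_equal fst) in HO. unfold ip, int_S2 in HO. autorewrite with creal in HO.
    rewrite !Rmult_0_l, !Rminus_0_r in HO.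
    rewrite (lin2 (fun t p => Re (F1 Buv t p * F1 W t p + F2 Buv t p * F2 W t p) * sin t)
                  (fun t p => Re (F1 Bvu t p * F1 W t p + F2 Bvu t p * F2 W t p) * sin t)) in HO.
    - etransitivity; [| exact HO]. apply RInt_ext; intros p0 _. apply RInt_ext; intros t0 _.
      unfold N, A1, A2, W, D. rewrite !F1_cl, !F2_cl. unfold Re, Im, Cconj.
      autorewrite with creal. match goal with |- ?a = ?b => change (@eq R a b) end. ring.
    - destruct (KC_plus _ _ (KC_mult _ _ K11 KW1) (KC_mult _ _ K12 KW2)) as [Ka _].
      apply K_mult; auto; apply K_sin1.
    - destruct (KC_plus _ _ (KC_mult _ _ K21 KW1) (KC_mult _ _ K22 KW2)) as [Ka _].
      apply K_mult; auto; apply K_sin1.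
    - intros t0 p0 Ht. rewrite gmet_F; auto.
    - intros t0 p0 Ht. rewrite gmet_F; auto. }
  assert (HN : forall t p, 0 < t < PI -> 0 < p < 2 * PI -> N t p = 0).
  { apply pos2; auto. intros; unfold N.
    pose proof (Rle_0_sqr (Re (A1 t p))); pose proof (Rle_0_sqr (Im (A1 t p)));
    pose proof (Rle_0_sqr (Re (A2 t p))); pose proof (Rle_0_sqr (Im (A2 t p))). unfold Rsqr in *. lra. }
  assert (HD : forall t p, 0 < t < PI -> 0 < p < 2 * PI ->
             cx (D (sph t p)) = RtoC 0 /\ cy (D (sph t p)) = RtoC 0 /\ cz (D (sph t p)) = RtoC 0).
  { intros t p Ht Hp. destruct (sq4 _ _ _ _ (HN t p Ht Hp)) as [a1 [a2 [a3 a4]]].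
    apply frame with (t := t) (p := p).
    - change (F1 D t p = RtoC 0). unfold D. rewrite F1_lc. fold (A1 t p).
      apply injective_projections; auto.
    - change (F2 D t p = RtoC 0). unfold D. rewrite F2_lc. fold (A2 t p).
      apply injective_projections; auto.
    - apply (FR_lc mu lam Buv Bvu (t, p)); auto. }
  destruct (KC_X Buv S1) as [Bx [By Bz]]. destruct (KC_X Bvu S2) as [Cx [Cy Cz]].
  assert (KDx : KC (Xx D)) by (change (KC (fun t p => (RtoC mu * Xx Buv t p + RtoC lam * Xx Bvu t p)%C)); kc).
  assert (KDy : KC (Xy D)) by (change (KC (fun t p => (RtoC mu * Xy Buv t p + RtoC lam * Xy Bvu t p)%C)); kc).
  assert (KDz : KC (Xz D)) by (change (KC (fun t p => (RtoC mu * Xz Buv t p + RtoC lam * Xz Bvu t p)%C)); kc).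
  assert (EX : forall (sel : C * C * C -> C), KC (fun t p => sel (D (sph t p))) ->
            (forall t p, 0 < t < PI -> 0 < p < 2 * PI -> sel (D (sph t p)) = RtoC 0) ->
            forall t p, sel (D (sph t p)) = RtoC 0).
  { intros sel [Ka Kb] Hs t p. apply injective_projections.
    - apply (extend (fun q => fst (sel (D q)))); auto.
      intros; rewrite Hs; auto.
    - apply (extend (fun q => snd (sel (D q)))); auto.
      intros; rewrite Hs; auto. }
  intros t p.
  pose proof (EX cx KDx (fun t p Ht Hp => proj1 (HD t p Ht Hp)) t p) as Ex.
  pose proof (EX cy KDy (fun t p Ht Hp => proj1 (proj2 (HD t p Ht Hp))) t p) as Ey.
  pose proof (EX cz KDz (fun t p Ht Hp => proj2 (proj2 (HD t p Ht Hp))) t p) as Ez.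
  unfold D, lc, cx, cy, cz in Ex, Ey, Ez; cbn [fst snd] in Ex, Ey, Ez.
  unfold vscale, cx, cy, cz. rewrite RtoC_opp. fold mu lam.
  f_equal; [f_equal|].
  - replace (RtoC mu * fst (fst (Buv (sph t p))))%C with
      ((RtoC mu * fst (fst (Buv (sph t p))) + RtoC lam * fst (fst (Bvu (sph t p)))) - RtoC lam * fst (fst (Bvu (sph t p))))%C by ring.
    rewrite Ex. ring.
  - replace (RtoC mu * snd (fst (Buv (sph t p))))%C with
      ((RtoC mu * snd (fst (Buv (sph t p))) + RtoC lam * snd (fst (Bvu (sph t p)))) - RtoC lam * snd (fst (Bvu (sph t p))))%C by ring.
    rewrite Ey. ring.
  - replace (RtoC mu * snd (Buv (sph t p)))%C with
      ((RtoC mu * snd (Buv (sph t p)) + RtoC lam * snd (Bvu (sph t p))) - RtoC lam * snd (Bvu (sph t p)))%C by ring.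
    rewrite Ez. ring.
Qed.
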